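(* Let $P,Q,R\in\mathbb P_d$, $U_P:=\operatorname{Pol}(P^{1/2}R^{1/2})$, $U_Q:=\operatorname{Pol}(Q^{1/2}R^{1/2})$, and let $|\Omega\rangle:=\sum_{i=1}^d|i\rangle\otimes|i\rangle\in\mathbb C^d\otimes\mathbb C^d$. Define the purifications $|P_{U_P^\top}\rangle:=(P^{1/2}\otimes U_P^\top)|\Omega\rangle$ and $|Q_{U_Q^\top}\rangle:=(Q^{1/2}\otimes U_Q^\top)|\Omega\rangle$ (so that the partial trace over the second factor of $|P_{U_P^\top}\rangle\langle P_{U_P^\top}|$ is $P$, and similarly for $Q$). Then $$\operatorname{F}_R(P,Q)=\big\langle P_{U_P^\top},\,Q_{U_Q^\top}\big\rangle,$$ where the inner product is conjugate-linear in the first argument.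
   Context: $\mathbb P_d$ is the set of $d\times d$ complex positive definite matrices; $\operatorname{Pol}(M):=M(M^*M)^{-1/2}$ is the unitary polar factor of an invertible $M$, and $^\top$ denotes transpose in the standard basis. The generalized fidelity is $\operatorname{F}_R(P,Q):=\operatorname{Tr}\big[\sqrt{R^{1/2}PR^{1/2}}\,R^{-1}\sqrt{R^{1/2}QR^{1/2}}\big]$. *)

(* Defs.v *)
(* Scalars: an arbitrary numClosedFieldType C
   (algebraically closed field with conjugation and partial order, e.g. the
   complex numbers). *)
From HB Require Import structures.
From mathcomp Require Import all_boot all_order all_algebra.
From mathcomp Require Import mxtens.
From Stdlib Require Import ClassicalEpsilon.
Set Implicit Arguments. Unset Strict Implicit. Unset Printing Implicit Defensive.
Import Order.TTheory GRing.Theory Num.Theory.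
Local Open Scope ring_scope.

Section Defs.
Variable C : numClosedFieldType.

Definition adjmx {m n : nat} (A : 'M[C]_(m, n)) : 'M[C]_(n, m) :=
  (map_mx Num.conj A)^T.

Definition hermitian {d : nat} (A : 'M[C]_d) : Prop := adjmx A = A.

Definition posdef {d : nat} (A : 'M[C]_d) : Prop :=
  hermitian A /\ forall v : 'cV[C]_d, v != 0 -> 0 < (adjmx v *m A *m v) ord0 ord0.

Definition possemidef {d : nat} (A : 'M[C]_d) : Prop :=
  hermitian A /\ forall v : 'cV[C]_d, 0 <= (adjmx v *m A *m v) ord0 ord0.

(* the positive semidefinite square root A^{1/2}: the (unique) PSD S with
   S S = A (chosen by classical choice; 0 if no such S exists) *)
Definition msqrt {d : nat} (A : 'M[C]_d) : 'M[C]_d :=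
  epsilon (inhabits 0) (fun S : 'M[C]_d => possemidef S /\ S *m S = A).

Definition Pol {d : nat} (M : 'M[C]_d) : 'M[C]_d :=
  M *m invmx (msqrt (adjmx M *m M)).

Definition fidR {d : nat} (R P Q : 'M[C]_d) : C :=
  let R12 := msqrt R in
  \tr (msqrt (R12 *m P *m R12) *m invmx R *m msqrt (R12 *m Q *m R12)).

Definition Omega (d : nat) : 'cV[C]_(d * d) :=
  \sum_(i < d) tensmx (delta_mx i ord0 : 'cV[C]_d) (delta_mx i ord0 : 'cV[C]_d).

Definition inner {n : nat} (x y : 'cV[C]_n) : C := (adjmx x *m y) ord0 ord0.

End Defs.

(* Main.v *)
Require Import Defs.
From HB Require Import structures.
From mathcomp Require Import all_boot all_order all_algebra.
From mathcomp Require Import mxtens spectral sesquilinear.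
From Stdlib Require Import ClassicalEpsilon.
Set Implicit Arguments. Unset Strict Implicit. Unset Printing Implicit Defensive.
Import Order.TTheory GRing.Theory Num.Theory.
Local Open Scope ring_scope.

Section H.
Variable C : numClosedFieldType.

Lemma adjmxE m n (A : 'M[C]_(m,n)) : adjmx A = (A ^t* )%sesqui.
Proof. by rewrite /adjmx map_trmx. Qed.

Lemma adjmx_ij m n (A : 'M[C]_(m,n)) i j : adjmx A i j = (A j i)^*.
Proof. by rewrite !mxE. Qed.

Lemma adjmxK m n (A : 'M[C]_(m,n)) : adjmx (adjmx A) = A.
Proof. by apply/matrixP=> i j; rewrite !mxE conjCK. Qed.

Lemma adjmx_mul m n p (A : 'M[C]_(m,n)) (B : 'M[C]_(n,p)) :
  adjmx (A *m B) = adjmx B *m adjmx A.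
Proof. by rewrite /adjmx map_mxM trmx_mul. Qed.

Lemma adjmx_inv n (A : 'M[C]_n) : adjmx (invmx A) = invmx (adjmx A).
Proof. by rewrite /adjmx map_invmx trmx_inv. Qed.

Lemma adjmx_tens m n p q (A : 'M[C]_(m,n)) (B : 'M[C]_(p,q)) :
  adjmx (A *t B) = adjmx A *t adjmx B.
Proof. by rewrite /adjmx map_mxT trmx_tens. Qed.

Lemma sq_unit n (S : 'M[C]_n) : S *m S \in unitmx -> S \in unitmx.
Proof. by rewrite unitmx_mul => /andP[]. Qed.

Lemma posdef_unit n (A : 'M[C]_n) : posdef A -> A \in unitmx.
Proof.
move=> [_ pA]; apply/negPn/negP => nu.
have : kermx A != 0 by rewrite kermx_eq0 row_free_unit.
move=> /eqP nz.
case: (pickP (fun ij : 'I_n * 'I_n => kermx A ij.1 ij.2 != 0)); last first.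
  move=> H; exfalso; apply: nz; apply/matrixP => i j.
  have := H (i, j); rewrite /= => /negbFE/eqP ->; by rewrite mxE.
move=> [i j] /= kij.
set u := row i (kermx A).
have uA : u *m A = 0 by rewrite /u -row_mul mulmx_ker row0.
have v0 : adjmx u != 0.
  have uj : u ord0 j = kermx A i j by rewrite /u !mxE.
  apply/eqP => /matrixP/(_ j ord0); rewrite adjmx_ij uj [(0 : 'cV_n) _ _]mxE => /eqP.
  by rewrite conjC_eq0 (negbTE kij).
have := pA _ v0; rewrite adjmxK uA mul0mx mxE ltxx //.
Qed.


Lemma adjmx_delta m n (i : 'I_m) (j : 'I_n) : adjmx (delta_mx i j : 'M[C]_(m,n)) = delta_mx j i.
Proof.
apply/matrixP=> a b; rewrite adjmx_ij !mxE.
by case: (_ == _); case: (_ == _); rewrite /= ?conjC1 ?conjC0.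
Qed.

Lemma delta_entry n (M : 'M[C]_n) i j :
  ((delta_mx 0 i : 'rV[C]_n) *m M *m (delta_mx j 0 : 'cV[C]_n)) 0 0 = M i j.
Proof. by rewrite -rowE -colE !mxE. Qed.

Lemma psd_sqrt_ex n (A : 'M[C]_n) : possemidef A ->
  exists S : 'M[C]_n, possemidef S /\ S *m S = A.
Proof.
move=> [hA pA].
have nA : A \is normalmx by apply/normalmxP; rewrite -adjmxE hA.
have /orthomx_spectralP eA := nA.
move: eA; set P := spectralmx A; set D := spectral_diag A => eA.
have Pu : P \is unitarymx := spectral_unitarymx A.
have PPa : P *m adjmx P = 1%:M by rewrite adjmxE; apply/unitarymxP.
have Pun : P \in unitmx := unitarymx_unit Pu.
have iP : invmx P = adjmx P by rewrite adjmxE invmx_unitary.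
have PaP : adjmx P *m P = 1%:M by rewrite -iP mulVmx.
rewrite iP in eA.
set Pa := adjmx P in eA PPa PaP.
have Dge : forall i, 0 <= D 0 i.
  move=> i; have := pA (Pa *m delta_mx i 0).
  rewrite adjmx_mul adjmx_delta /Pa adjmxK eA -/Pa.
  rewrite !mulmxA -(mulmxA _ P Pa) PPa mulmx1 -(mulmxA _ P Pa) PPa mulmx1.
  by rewrite delta_entry mxE eqxx mulr1n.
pose s := \row_j sqrtC (D 0 j).
have sge : forall j, 0 <= s 0 j by move=> j; rewrite mxE sqrtC_ge0.
exists (Pa *m diag_mx s *m P); split; last first.
  rewrite eA -!mulmxA; congr (_ *m _); rewrite !mulmxA -(mulmxA _ P Pa) PPa mulmx1.
  rewrite mulmx_diag; congr (diag_mx _ *m _); apply/rowP => j.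
  by rewrite !mxE -expr2 sqrtCK.
split.
  rewrite /Defs.hermitian !adjmx_mul /Pa adjmxK -/Pa mulmxA; congr (_ *m _ *m _).
  apply/matrixP => a b; rewrite adjmx_ij !mxE eq_sym.
  case: eqP => [->|_]; rewrite /= ?mulr1n ?mulr0n ?conjC0 //.
  by rewrite conj_Creal // sqrtC_real.
move=> v; set w := P *m v.
have -> : adjmx v *m (Pa *m diag_mx s *m P) *m v = adjmx w *m diag_mx s *m w.
  by rewrite /w adjmx_mul !mulmxA.
rewrite mul_mx_diag !mxE; apply: sumr_ge0 => k _; rewrite !mxE.
rewrite mulrAC; apply: mulr_ge0; last by rewrite sqrtC_ge0.
by rewrite mulrC mul_conjC_ge0.
Qed.


Lemma msqrtP n (A : 'M[C]_n) : possemidef A ->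
  possemidef (msqrt A) /\ msqrt A *m msqrt A = A.
Proof. by move=> pA; rewrite /msqrt; exact: (epsilon_spec _ _ (psd_sqrt_ex pA)). Qed.

Lemma posdef_psd n (A : 'M[C]_n) : posdef A -> possemidef A.
Proof.
move=> [hA pA]; split => // v; case: (eqVneq v 0) => [->|nz].
  by rewrite mulmx0 mxE.
exact: ltW (pA _ nz).
Qed.

Lemma psd_congr n (A N : 'M[C]_n) : possemidef A -> possemidef (adjmx N *m A *m N).
Proof.
move=> [hA pA]; split.
  by rewrite /Defs.hermitian !adjmx_mul adjmxK hA mulmxA.
move=> v; have := pA (N *m v).
by rewrite adjmx_mul !mulmxA.
Qed.

Lemma psd_gram n (N : 'M[C]_n) : possemidef (adjmx N *m N).
Proof.
split.
  by rewrite /Defs.hermitian !adjmx_mul adjmxK.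
move=> v; set w := N *m v.
have -> : adjmx v *m (adjmx N *m N) *m v = adjmx w *m w by rewrite /w adjmx_mul !mulmxA.
rewrite !mxE; apply: sumr_ge0 => k _; rewrite !mxE mulrC; exact: mul_conjC_ge0.
Qed.

Lemma polar_facts n (M : 'M[C]_n) : M \in unitmx ->
  adjmx (Pol M) *m M = msqrt (adjmx M *m M) /\
  adjmx M *m Pol M = msqrt (adjmx M *m M).
Proof.
move=> Mu; have [[hS _] SS] := msqrtP (psd_gram M).
set S := msqrt _ in hS SS *.
have Su : S \in unitmx.
  by apply: sq_unit; rewrite SS unitmx_mul Mu andbT /adjmx unitmx_tr map_unitmx.
rewrite /Pol -/S; split.
  by rewrite adjmx_mul adjmx_inv hS -mulmxA -SS mulKmx.
by rewrite mulmxA -SS mulmxK.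
Qed.

Lemma adjmx_sum n m p (F : 'I_n -> 'M[C]_(m,p)) :
  adjmx (\sum_i F i) = \sum_i adjmx (F i).
Proof.
apply/matrixP=> a b; rewrite adjmx_ij !summxE rmorph_sum.
by apply: eq_bigr => i _; rewrite adjmx_ij.
Qed.

Lemma tens11 (a b : 'M[C]_1) : (a *t b : 'M_(1, 1)) 0 0 = a 0 0 * b 0 0.
Proof.
rewrite mxE; have o1 : forall k : 'I_1, k = 0 by move=> k; apply: ord1.
by rewrite !(o1 (mxtens_unindex _).1) !(o1 (mxtens_unindex _).2).
Qed.

Lemma omega_form d (X Y : 'M[C]_d) :
  (adjmx (Omega C d) *m (X *t Y) *m Omega C d) 0 0 = \sum_i \sum_j X i j * Y i j.
Proof.
rewrite /Omega adjmx_sum mulmx_suml mulmx_suml summxE; apply: eq_bigr => i _.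
rewrite mulmx_sumr summxE; apply: eq_bigr => j _.
have -> : adjmx (delta_mx i ord0 *t delta_mx i ord0 : 'M[C]_(d*d,1*1)) = (adjmx (delta_mx i ord0 : 'cV[C]_d)) *t adjmx (delta_mx i ord0 : 'cV[C]_d) by apply: adjmx_tens.
have E : forall (a b : 'rV[C]_d) (c e : 'cV[C]_d),
  (a *t b : 'M_(1, d*d)) *m (X *t Y) *m (c *t e : 'M_(d*d,1)) =
  ((a *m X *m c) *t (b *m Y *m e) : 'M_(1,1)).
  move=> a b c e.
  have -> : (a *t b : 'M_(1,d*d)) *m (X *t Y) = ((a *m X) *t (b *m Y) : 'M_(1, d*d)).
    have h := (@tensmx_mul C 1 d 1 d d d a b X Y). exact h.
  have h := (@tensmx_mul C 1 d 1 d 1 1 (a *m X) (b *m Y) c e). exact h.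
by rewrite !adjmx_delta E tens11 !delta_entry.
Qed.

Lemma trace_form d (U V X : 'M[C]_d) :
  \tr (adjmx U *m X *m V) = \sum_i \sum_j X i j * (adjmx (U^T) *m V^T) i j.
Proof.
rewrite /mxtrace.
transitivity (\sum_k \sum_j \sum_i (U i k)^* * X i j * V j k).
  apply: eq_bigr => k _; rewrite mxE; apply: eq_bigr => j _.
  by rewrite mxE big_distrl; apply: eq_bigr => i _; rewrite !mxE.
under eq_bigr do rewrite exchange_big.
rewrite exchange_big; apply: eq_bigr => i _.
rewrite exchange_big; apply: eq_bigr => j _.
rewrite mxE big_distrr; apply: eq_bigr => k _ /=.
by rewrite !mxE mulrCA mulrA.
Qed.

End H.

Theorem mainTheorem17 (C : numClosedFieldType) (d : nat) (P Q R : 'M[C]_d) :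
  posdef P -> posdef Q -> posdef R ->
  let UP := Pol (msqrt P *m msqrt R) in
  let UQ := Pol (msqrt Q *m msqrt R) in
  fidR R P Q =
  inner (tensmx (msqrt P) UP^T *m Omega C d) (tensmx (msqrt Q) UQ^T *m Omega C d).
Proof.
move=> pP pQ pR UP UQ.
have [[hP _] Psq] := msqrtP (posdef_psd pP).
have [[hQ _] Qsq] := msqrtP (posdef_psd pQ).
have [[hR _] Rsq] := msqrtP (posdef_psd pR).
have Pu := posdef_unit pP; have Qu := posdef_unit pQ; have Ru := posdef_unit pR.
have P12u : msqrt P \in unitmx by apply: sq_unit; rewrite Psq.
have Q12u : msqrt Q \in unitmx by apply: sq_unit; rewrite Qsq.
have R12u : msqrt R \in unitmx by apply: sq_unit; rewrite Rsq.
have MPu : msqrt P *m msqrt R \in unitmx by rewrite unitmx_mul P12u R12u.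
have MQu : msqrt Q *m msqrt R \in unitmx by rewrite unitmx_mul Q12u R12u.
have eMP : adjmx (msqrt P *m msqrt R) *m (msqrt P *m msqrt R) = msqrt R *m P *m msqrt R.
  by rewrite adjmx_mul hP hR -!mulmxA (mulmxA (msqrt P)) Psq.
have eMQ : adjmx (msqrt Q *m msqrt R) *m (msqrt Q *m msqrt R) = msqrt R *m Q *m msqrt R.
  by rewrite adjmx_mul hQ hR -!mulmxA (mulmxA (msqrt Q)) Qsq.
have [polP _] := polar_facts MPu.
have [_ polQ] := polar_facts MQu.
rewrite eMP in polP; rewrite eMQ in polQ.
have RiR : msqrt R *m invmx R *m msqrt R = 1%:M.
  move: Rsq; set S := msqrt R => Rsq.
  have RS : R *m S = S *m R by rewrite -Rsq mulmxA.
  have cm : invmx R *m msqrt R = msqrt R *m invmx R.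
    apply: (canLR (mulKmx Ru)).
    by rewrite mulmxA RS -mulmxA mulmxV // mulmx1.
  by rewrite -mulmxA cm mulmxA Rsq mulmxV.
transitivity (\tr (adjmx UP *m (adjmx (msqrt P) *m msqrt Q) *m UQ)).
  rewrite /fidR /= -polP -polQ /UP /UQ; congr (\tr _).
  rewrite adjmx_mul hQ hR hP !mulmxA; congr (_ *m _ *m _).
  rewrite -!mulmxA; congr (_ *m (_ *m _)).
  by rewrite !mulmxA RiR mul1mx.
rewrite trace_form /inner !adjmx_mul !mulmxA adjmx_tens.
rewrite -(mulmxA _ (_ *t _) (_ *t _)) tensmx_mul.
by rewrite omega_form.
Qed.
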